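(* Let $T,S\in\mathcal{B}_A(\mathcal{H})$ be $A$-selfadjoint (i.e. $AT$ and $AS$ are selfadjoint). Then $$\omega_A(T+S)\le\sqrt{\omega_A^2(T+iS)+\omega_A(ST)+\|T\|_A\|S\|_A}\le\omega_A(T)+\omega_A(S).$$
   Context: $\mathcal{H}$ is a complex Hilbert space with inner product $\langle\cdot,\cdot\rangle$, and $A$ is a fixed nonzero positive bounded operator on $\mathcal{H}$. Set $\langle x,y\rangle_A=\langle Ax,y\rangle$ and $\|x\|_A=\|A^{1/2}x\|$. $\mathcal{B}_A(\mathcal{H})$ is the set of bounded operators $T$ for which there exists a bounded $S$ with $\langle Tx,y\rangle_A=\langle x,Sy\rangle_A$ for all $x,y$. For an operator $T$ with $\|Tx\|_A\le\lambda\|x\|_A$ for some $\lambda>0$ and all $x$, $\|T\|_A=\sup\{\|Tx\|_A: \|x\|_A=1\}$, and $\omega_A(T)=\sup\{|\langle Tx,x\rangle_A|:\|x\|_A=1\}$. *)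

(* Defs.v *)
From HB Require Import structures.
From mathcomp Require Import all_boot all_order all_algebra.
From mathcomp Require Import complex.
From mathcomp Require Import boolp classical_sets reals.
Set Implicit Arguments.
Unset Strict Implicit.
Unset Printing Implicit Defensive.
Import Order.TTheory GRing.Theory Num.Theory.
Local Open Scope ring_scope.
Local Open Scope classical_set_scope.

Section Hilbert.
Variables (R : realType) (V : lmodType R[i]) (ip : V -> V -> R[i]).

Definition vnorm (x : V) : R := Num.sqrt (complex.Re (ip x x)).

Definition is_hilbert : Prop :=
  [/\ (forall (a : R[i]) (x y z : V), ip (a *: x + y) z = a * ip x z + ip y z),
      (forall x y : V, ip y x = conjc (ip x y)),
      (forall x : V, 0 <= ip x x),
      (forall x : V, ip x x = 0 -> x = 0)
    & (forall u : nat -> V,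
        (forall e : R, 0 < e -> exists N : nat, forall m n : nat,
            (N <= m)%N -> (N <= n)%N -> vnorm (u m - u n) < e) ->
        exists l : V, forall e : R, 0 < e -> exists N : nat, forall n : nat,
            (N <= n)%N -> vnorm (u n - l) < e)].

Definition bounded_op (T : V -> V) : Prop :=
  (forall (a : R[i]) (x y : V), T (a *: x + y) = a *: T x + T y) /\
  exists c : R, forall x : V, vnorm (T x) <= c * vnorm x.

Definition positive_op (A : V -> V) : Prop :=
  bounded_op A /\ forall x : V, 0 <= ip (A x) x.

Definition nonzero_op (A : V -> V) : Prop := exists x : V, A x <> 0.

Variable A : V -> V.

Definition ipA (x y : V) : R[i] := ip (A x) y.

Definition normA (x : V) : R := Num.sqrt (complex.Re (ipA x x)).

Definition in_BA (T : V -> V) : Prop :=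
  bounded_op T /\
  exists S : V -> V, bounded_op S /\ forall x y : V, ipA (T x) y = ipA x (S y).

Definition A_selfadjoint (T : V -> V) : Prop :=
  forall x y : V, ip (A (T x)) y = ip x (A (T y)).

Definition A_sphere : set V := [set x | normA x = 1].

Definition opnormA (T : V -> V) : R :=
  sup [set normA (T x) | x in A_sphere].

Definition numradA (T : V -> V) : R :=
  sup [set ComplexField.Normc.normc (ipA (T x) x) | x in A_sphere].

End Hilbert.

Definition op_add {R : realType} {V : lmodType R[i]} (T S : V -> V) : V -> V :=
  fun x => T x + S x.
Definition op_scale {R : realType} {V : lmodType R[i]} (a : R[i]) (T : V -> V)
  : V -> V := fun x => a *: T x.

(* Main.v *)
Require Import Defs.
From HB Require Import structures.
From mathcomp Require Import all_boot all_order all_algebra.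
From mathcomp Require Import complex.
From mathcomp Require Import boolp classical_sets reals.
From mathcomp Require Import ring lra.
Set Implicit Arguments.
Unset Strict Implicit.
Import Order.TTheory GRing.Theory Num.Theory.
Local Open Scope ring_scope.

Notation cRe := (@complex.Re _).
Notation cIm := (@complex.Im _).
Notation nc := (@ComplexField.Normc.normc _).

Ltac cring := apply/eqP; rewrite eq_complex /=; apply/andP; split; apply/eqP; ring.

Section Cplx.
Variable R : realType.
Implicit Types z w : R[i].

Lemma nc_def z : nc z = Num.sqrt (cRe z ^+ 2 + cIm z ^+ 2).
Proof. by case: z. Qed.

Lemma nc_ge0 z : 0 <= nc z.
Proof. by rewrite nc_def sqrtr_ge0. Qed.

Lemma Re_le_nc z : cRe z <= nc z.
Proof.
rewrite nc_def; apply: le_trans (ler_norm _) _.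
rewrite -sqrtr_sqr ler_sqrt; last by rewrite addr_ge0 // sqr_ge0.
by rewrite lerDl sqr_ge0.
Qed.

Lemma nc_real (r : R) : nc (r%:C)%C = `|r|.
Proof. by rewrite nc_def /= expr0n /= addr0 sqrtr_sqr. Qed.

Lemma conjD z w : conjc (z + w) = conjc z + conjc w.
Proof. by case: z; case: w => *; cring. Qed.
Lemma conjM z w : conjc (z * w) = conjc z * conjc w.
Proof. by case: z; case: w => *; cring. Qed.
Lemma conjN z : conjc (- z) = - conjc z.
Proof. by case: z => *; cring. Qed.
Lemma conjR (r : R) : conjc (r%:C)%C = (r%:C)%C.
Proof. by rewrite /= oppr0. Qed.
Lemma ReD z w : cRe (z + w) = cRe z + cRe w.
Proof. by case: z; case: w. Qed.
Lemma ReN z : cRe (- z) = - cRe z.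
Proof. by case: z. Qed.
Lemma ReB z w : cRe (z - w) = cRe z - cRe w.
Proof. by case: z; case: w. Qed.
Lemma ReR (r : R) : cRe (r%:C)%C = r.
Proof. by []. Qed.
Lemma ReRM (r : R) z : cRe ((r%:C)%C * z) = r * cRe z.
Proof. by case: z => a b /=; ring. Qed.
Lemma realE z : cIm z = 0 -> z = ((cRe z)%:C)%C.
Proof. by case: z => a b /= ->. Qed.
Lemma ncN z : nc (- z) = nc z.
Proof. by rewrite !nc_def; case: z => a b /=; rewrite !sqrrN. Qed.
End Cplx.

Section Form.
Variables (R : realType) (V : lmodType R[i]) (h : V -> V -> R[i]).
Hypothesis hlin : forall (a : R[i]) (x y z : V), h (a *: x + y) z = a * h x z + h y z.
Hypothesis hsym : forall x y : V, h y x = conjc (h x y).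
Hypothesis hpos : forall x : V, 0 <= h x x.

Lemma h0l z : h 0 z = 0.
Proof.
have := hlin 1 0 0 z; rewrite scale1r addr0 mul1r -{1}[h 0 z]addr0.
by move/addrI.
Qed.
Lemma hDl x y z : h (x + y) z = h x z + h y z.
Proof. by have := hlin 1 x y z; rewrite scale1r mul1r. Qed.
Lemma hZl a x z : h (a *: x) z = a * h x z.
Proof. by have := hlin a x 0 z; rewrite addr0 h0l addr0. Qed.
Lemma hNl x z : h (- x) z = - h x z.
Proof. by rewrite -scaleN1r hZl mulN1r. Qed.
Lemma hBl x y z : h (x - y) z = h x z - h y z.
Proof. by rewrite hDl hNl. Qed.
Lemma hDr z x y : h z (x + y) = h z x + h z y.
Proof. by rewrite hsym hDl conjD -!hsym. Qed.
Lemma hZr z a x : h z (a *: x) = conjc a * h z x.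
Proof. by rewrite hsym hZl conjM -hsym. Qed.
Lemma hNr z x : h z (- x) = - h z x.
Proof. by rewrite hsym hNl conjN -hsym. Qed.
Lemma hBr z x y : h z (x - y) = h z x - h z y.
Proof. by rewrite hDr hNr. Qed.

Definition q x := cRe (h x x).
Lemma q_ge0 x : 0 <= q x.
Proof. by have := hpos x; rewrite /q lecE => /andP[]. Qed.
Lemma hxx x : h x x = ((q x)%:C)%C.
Proof. by apply: realE; apply: ger0_Im. Qed.

Lemma CS2 x y : nc (h x y) ^+ 2 <= q x * q y.
Proof.
set c := h x y.
set n := cRe c ^+ 2 + cIm c ^+ 2.
have n0 : 0 <= n by rewrite addr_ge0 // sqr_ge0.
have key : forall t : R, 0 <= q x - 2 * t * n + t ^+ 2 * n * q y.
  move=> t; have := q_ge0 (x + (- ((t%:C)%C * c)) *: y).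
  rewrite /q hDl !hDr !hZl !hZr (hsym x y) -/c !hxx /n /c.
  move: (q x) (q y) (h x y) => a b [u v] /=.
  by congr (_ <= _); ring.
have -> : nc c ^+ 2 = n by rewrite nc_def sqr_sqrtr.
have qx0 := q_ge0 x; have qy0 := q_ge0 y.
have [qyp|] := ltP 0 (q y).
  have := key (q y)^-1; set t := (q y)^-1 => H.
  have tq : t * q y = 1 by rewrite mulVf // gt_eqF.
  have H2 := mulr_ge0 H (ltW qyp).
  have E : (q x - 2 * t * n + t ^+ 2 * n * q y) * q y
      = q x * q y - 2 * n * (t * q y) + n * (t * q y) ^+ 2 by ring.
  rewrite E tq in H2; lra.
rewrite le_eqVlt ltNge qy0 orbF => /eqP qyz.
rewrite qyz mulr0; move: n0; rewrite le_eqVlt => /orP[/eqP <- //|np].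
have := key ((q x + 1) * n^-1); set t := (q x + 1) * n^-1 => H.
have tn : t * n = q x + 1 by rewrite /t -mulrA mulVf ?mulr1 // gt_eqF.
rewrite qyz mulr0 addr0 -mulrA tn in H; lra.
Qed.

Lemma CS x y : nc (h x y) <= Num.sqrt (q x) * Num.sqrt (q y).
Proof.
rewrite -sqrtrM ?q_ge0 // -[nc (h x y)]ger0_norm ?nc_ge0 // -sqrtr_sqr.
by rewrite ler_sqrt ?mulr_ge0 ?q_ge0 // CS2.
Qed.

End Form.

Section Polar.
Variables (R : realType) (V : lmodType R[i]) (h : V -> V -> R[i]).
Hypothesis hlin : forall (a : R[i]) (x y z : V), h (a *: x + y) z = a * h x z + h y z.
Hypothesis hDr' : forall z x y, h z (x + y) = h z x + h z y.
Hypothesis hZr' : forall z a x, h z (a *: x) = conjc a * h z x.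
Hypothesis hpos : forall x : V, 0 <= h x x.

Lemma polar x y : h y x = conjc (h x y).
Proof.
have e1 := ger0_Im (hpos (x + y)).
have e2 := ger0_Im (hpos ('i%C *: x + y)).
have ex := ger0_Im (hpos x); have ey := ger0_Im (hpos y).
rewrite !(hDl hlin) !hDr' in e1.
rewrite !(hDl hlin) !hDr' !(hZl hlin) !hZr' in e2.
move: e1 e2 ex ey; move: (h x x) (h y y) (h x y) (h y x) => [a1 a2] [b1 b2] [c1 c2] [d1 d2] /=.
move=> e1 e2 ex ey.
apply/eqP; rewrite eq_complex /=; apply/andP; split; apply/eqP; lra.
Qed.
End Polar.

Lemma bernoulli_ineq (R : realType) (Q : R) (N : nat) :
  1 <= Q -> 1 + N%:R * (Q - 1) <= Q ^+ N.
Proof.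
move=> Q1; elim: N => [|N IH]; first by rewrite mul0r addr0 expr0.
rewrite exprS -addn1 natrD mulrDl mul1r.
have N0 : (0 : R) <= N%:R by rewrite ler0n.
have P1 : 0 <= (Q - 1) * (Q ^+ N - (1 + N%:R * (Q - 1))) by apply: mulr_ge0; rewrite subr_ge0.
have P2 := mulr_ge0 N0 (sqr_ge0 (Q - 1)).
nra.
Qed.

Section Abound.
Variables (R : realType) (V : lmodType R[i]) (h : V -> V -> R[i]).
Hypothesis hlin : forall (a : R[i]) (x y z : V), h (a *: x + y) z = a * h x z + h y z.
Hypothesis hsym : forall x y : V, h y x = conjc (h x y).
Hypothesis hpos : forall x : V, 0 <= h x x.
Variable B : V -> V.
Hypothesis Bsym : forall x y, h (B x) y = h x (B y).

Lemma iter_sym n x y : h (iter n B x) y = h x (iter n B y).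
Proof.
elim: n x y => [//|n IH] x y.
by rewrite iterS Bsym IH -iterSr iterS.
Qed.

Lemma sq_step (C : V -> V) (Csym : forall x y, h (C x) y = h x (C y)) x :
  q h x = 1 -> q h (C x) ^+ 2 <= q h (C (C x)).
Proof.
move=> qx.
have H : q h (C x) <= Num.sqrt (q h (C (C x))).
  have := CS hlin hsym hpos x (C (C x)); rewrite qx sqrtr1 mul1r.
  apply: le_trans; rewrite /q Csym; exact: Re_le_nc.
have := lerXn2r 2 (q_ge0 hpos (C x)) (sqrtr_ge0 _) H.
by rewrite sqr_sqrtr // (q_ge0 hpos).
Qed.

Lemma pow_step n x : q h x = 1 ->
  q h (B x) ^+ (2 ^ n) <= q h (iter (2 ^ n) B x).
Proof.
move=> qx; elim: n => [|n IH]; first by rewrite expn0 expr1.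
rewrite expnS mulnC exprM.
apply: le_trans (lerXn2r 2 _ _ IH) _; rewrite ?nnegrE ?exprn_ge0 ?(q_ge0 hpos) //.

rewrite muln2 -addnn iterD.
exact: (sq_step (iter_sym (2 ^ n)) qx).
Qed.

Lemma A_bound x (K D : R) : q h x = 1 -> 0 < K ->
  (forall m, q h (iter m B x) <= D * K ^+ m) -> q h (B x) <= K.
Proof.
move=> qx K0 Hm; rewrite leNgt; apply/negP => lt.
set Q := q h (B x) / K.
have Q1 : 1 < Q by rewrite /Q ltr_pdivlMr // mul1r.
have HQ : forall n : nat, Q ^+ (2 ^ n) <= D.
  move=> n; rewrite /Q exprMn exprVn.
  rewrite ler_pdivrMr ?exprn_gt0 //.
  exact: le_trans (pow_step n qx) (Hm _).
have Q10 : 0 < Q - 1 by rewrite subr_gt0.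
have := archi_boundP (divr_ge0 (normr_ge0 D) (ltW Q10)).
set n := Num.Def.archi_bound _ => Hn.
rewrite ltr_pdivrMr // in Hn.
have B1 := bernoulli_ineq (2 ^ n) (ltW Q1).
have n2 : (n%:R : R) <= (2 ^ n)%:R by rewrite ler_nat ltnW // ltn_expl.
have n3 := ler_wpM2r (ltW Q10) n2.
have := HQ n; have := ler_norm D.
lra.
Qed.
End Abound.

Section OmegaBound.
Variables (R : realType) (V : lmodType R[i]) (h : V -> V -> R[i]).
Hypothesis hlin : forall (a : R[i]) (x y z : V), h (a *: x + y) z = a * h x z + h y z.
Hypothesis hsym : forall x y : V, h y x = conjc (h x y).
Hypothesis hpos : forall x : V, 0 <= h x x.
Variable B : V -> V.
Hypothesis Blin : forall (a : R[i]) (x y : V), B (a *: x + y) = a *: B x + B y.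
Hypothesis Bsym : forall x y, h (B x) y = h x (B y).

Lemma B0 : B 0 = 0.
Proof.
by have := Blin (-1) 0 0; rewrite !scaleN1r oppr0 addr0 addNr.
Qed.
Lemma BD x y : B (x + y) = B x + B y.
Proof. by have := Blin 1 x y; rewrite !scale1r. Qed.
Lemma BZ a x : B (a *: x) = a *: B x.
Proof. by have := Blin a x 0; rewrite !addr0 B0 addr0. Qed.
Lemma BN x : B (- x) = - B x.
Proof. by rewrite -scaleN1r BZ scaleN1r. Qed.
Lemma BB x y : B (x - y) = B x - B y.
Proof. by rewrite BD BN. Qed.

Variable w : R.
Hypothesis Hw : forall u, q h u = 1 -> nc (h (B u) u) <= w.

Lemma Hw_homog z : nc (h (B z) z) <= w * q h z.
Proof.
have qz0 := q_ge0 hpos z.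
move: qz0; rewrite le_eqVlt => /orP[/eqP qz|qzp].
  rewrite -qz mulr0.
  have := CS hlin hsym hpos (B z) z; rewrite -qz sqrtr0 mulr0 => H.
  by apply: le_trans H _.
set r := (Num.sqrt (q h z))^-1.
have sq0 : 0 < Num.sqrt (q h z) by rewrite sqrtr_gt0.
have r2 : r ^+ 2 * q h z = 1.
  by rewrite /r exprVn sqr_sqrtr ?mulVf // ?gt_eqF // ltW.
have r0 : 0 < r by rewrite invr_gt0.
have Hu := Hw (u := ((r%:C)%C *: z)).
have qu : q h ((r%:C)%C *: z) = 1.
  rewrite /q (hZl hlin) (hZr hlin hsym) (hxx hpos) -r2.
  rewrite /=; ring.
have := Hu qu; rewrite BZ (hZl hlin) (hZr hlin hsym) conjR mulrA.
rewrite !ComplexField.Normc.normcM !nc_real gtr0_norm // => H.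
have : r * r * nc (h (B z) z) * q h z <= w * q h z.
  by rewrite ler_wpM2r // ltW.
suff -> : r * r * nc (h (B z) z) * q h z = nc (h (B z) z) by [].
by rewrite -expr2 mulrAC r2 mul1r.
Qed.

Lemma opnorm_le x : q h x = 1 -> Num.sqrt (q h (B x)) <= w.
Proof.
move=> qx.
have w0 : 0 <= w by apply: le_trans (Hw qx); exact: nc_ge0.
set s := Num.sqrt (q h (B x)).
have s0 : 0 <= s := sqrtr_ge0 _.
move: s0; rewrite le_eqVlt => /orP[/eqP <- //|sp].
set y := ((s^-1)%:C)%C *: B x.
have E1 : cRe (h (B (x + y)) (x + y)) - cRe (h (B (x - y)) (x - y))
    = 4 * cRe (h (B x) y).
  rewrite BD BB !(hDl hlin) ?(hNl hlin) !(hDr hlin hsym) ?(hNr hlin hsym).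
  rewrite (Bsym y x) (hsym (B x) y).
  move: (h (B x) x) (h (B x) y) (h (B y) y) (h (B y) (B x)) => [a1 a2] [b1 b2] [c1 c2] [d1 d2] /=.
  ring.
have E2 : cRe (h (B x) y) = s.
  rewrite /y (hZr hlin hsym) conjR (hxx hpos) /=.
  rewrite mul0r subr0 -[q h (B x)](sqr_sqrtr (q_ge0 hpos (B x))) -/s expr2 mulKf //.
  by rewrite gt_eqF.
have E3 : q h (x + y) + q h (x - y) = 4.
  rewrite /q !(hDl hlin) ?(hNl hlin) !(hDr hlin hsym) ?(hNr hlin hsym).
  rewrite (hsym x y).
  have qy : q h y = 1.
    rewrite /q /y (hZl hlin) (hZr hlin hsym) conjR (hxx hpos) /=.
    rewrite -[q h (B x)](sqr_sqrtr (q_ge0 hpos (B x))) -/s.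
    by field; rewrite gt_eqF.
  move: qx qy; rewrite /q; move: (h x x) (h y y) (h x y) => [a1 a2] [b1 b2] [c1 c2] /= qx qy.
  lra.
have H1 := le_trans (Re_le_nc _) (Hw_homog (x + y)).
have H2 : - cRe (h (B (x - y)) (x - y)) <= w * q h (x - y).
  by rewrite -ReN; apply: le_trans (Re_le_nc _) _; rewrite ncN; exact: Hw_homog.
have : 4 * s <= w * 4.
  by rewrite -E2 -E1 -E3 mulrDr; lra.
lra.
Qed.
End OmegaBound.

Section Pointwise.
Variables (R : realType) (V : lmodType R[i]) (h : V -> V -> R[i]).
Hypothesis hlin : forall (a : R[i]) (x y z : V), h (a *: x + y) z = a * h x z + h y z.
Hypothesis hsym : forall x y : V, h y x = conjc (h x y).
Hypothesis hpos : forall x : V, 0 <= h x x.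
Variables T S : V -> V.
Hypothesis Tsym : forall x y, h (T x) y = h x (T y).
Hypothesis Ssym : forall x y, h (S x) y = h x (S y).

Lemma realB (B : V -> V) (Bsym : forall x y, h (B x) y = h x (B y)) x :
  h (B x) x = ((cRe (h (B x) x))%:C)%C.
Proof.
apply: realE; have := hsym x (B x); rewrite -Bsym.
by case: (h (B x) x) => a b /= [] /eqP; rewrite -subr_eq0 opprK -mulr2n mulrn_eq0 /= => /eqP.
Qed.

Lemma absB_le (B : V -> V) (Bsym : forall x y, h (B x) y = h x (B y)) x :
  q h x = 1 -> `|cRe (h (B x) x)| <= Num.sqrt (q h (B x)).
Proof.
move=> qx; rewrite -nc_real -(realB Bsym).
by have := CS hlin hsym hpos (B x) x; rewrite qx sqrtr1 mulr1.
Qed.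

Lemma buzano x : q h x = 1 ->
  2 * cRe (h (T x) x) * cRe (h (S x) x)
    <= nc (h (T x) (S x)) + Num.sqrt (q h (T x)) * Num.sqrt (q h (S x)).
Proof.
move=> qx.
set t := cRe (h (T x) x); set s := cRe (h (S x) x).
set u := (((2 * t)%:C)%C *: x) - T x.
have qu : q h u = q h (T x).
  rewrite /q /u !(hDl hlin) ?(hNl hlin) !(hDr hlin hsym) ?(hNr hlin hsym).
  rewrite !(hZl hlin) !(hZr hlin hsym) -Tsym (realB Tsym x) -/t.
  move: qx; rewrite /q; move: (h x x) (h (T x) (T x)) => [a1 a2] [b1 b2] /= ->.
  ring.
have hu : h u (S x) = ((2 * t * s)%:C)%C - h (T x) (S x).
  rewrite /u (hDl hlin) (hNl hlin) (hZl hlin) -Ssym (realB Ssym x) -/s.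
  by move: (h (T x) (S x)) => [a1 a2]; apply/eqP; rewrite eq_complex /=; apply/andP; split; apply/eqP; ring.
have H1 := CS hlin hsym hpos u (S x); rewrite qu in H1.
have E : 2 * t * s = cRe (h u (S x)) + cRe (h (T x) (S x)).
  by rewrite hu ReB ReR; ring.
rewrite E addrC; apply: lerD; first exact: Re_le_nc.
exact: le_trans (Re_le_nc _) H1.
Qed.

End Pointwise.

Section Growth.
Variables (R : realType) (V : lmodType R[i]) (ip : V -> V -> R[i]).
Hypothesis ipl : forall (a : R[i]) (x y z : V), ip (a *: x + y) z = a * ip x z + ip y z.
Hypothesis ipsym : forall x y : V, ip y x = conjc (ip x y).
Hypothesis ippos : forall x : V, 0 <= ip x x.
Variables (A B : V -> V) (cA cB : R).
Hypothesis HA : forall x, vnorm ip (A x) <= cA * vnorm ip x.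
Hypothesis HB : forall x, vnorm ip (B x) <= cB * vnorm ip x.

Lemma vnormE x : vnorm ip x = Num.sqrt (q ip x).
Proof. by []. Qed.

Lemma vnorm_ge0 x : 0 <= vnorm ip x.
Proof. exact: sqrtr_ge0. Qed.

Lemma growth x m : q (fun u v => ip (A u) v) (iter m B x)
   <= ((`|cA| + 1) * vnorm ip x ^+ 2) * ((`|cB| + 1) ^+ 2) ^+ m.
Proof.
have cB1 : cB <= `|cB| + 1 by apply: le_trans (ler_norm _) _; rewrite lerDl.
have cA1 : cA <= `|cA| + 1 by apply: le_trans (ler_norm _) _; rewrite lerDl.
have cB0 : 0 <= `|cB| + 1 by rewrite addr_ge0.
have cA0 : 0 <= `|cA| + 1 by rewrite addr_ge0.
have Hv : forall m, vnorm ip (iter m B x) <= (`|cB| + 1) ^+ m * vnorm ip x.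
  elim => [|n IH]; first by rewrite expr0 mul1r.
  rewrite iterS exprS -mulrA; apply: le_trans (HB _) _.
  apply: le_trans (ler_wpM2r (vnorm_ge0 _) cB1) _.
  exact: ler_wpM2l.
have Hq : forall y, q (fun u v => ip (A u) v) y <= (`|cA| + 1) * vnorm ip y ^+ 2.
  move=> y; rewrite /q; apply: le_trans (Re_le_nc _) _.
  apply: le_trans (CS ipl ipsym ippos (A y) y) _.
  rewrite -!vnormE expr2 mulrA; apply: ler_wpM2r; first exact: vnorm_ge0.
  apply: (le_trans (HA y)); apply: ler_wpM2r => //; exact: vnorm_ge0.
apply: le_trans (Hq _) _.
rewrite -mulrA; apply: ler_wpM2l => //.
have := lerXn2r 2 _ _ (Hv m); rewrite !nnegrE vnorm_ge0 mulr_ge0 ?exprn_ge0 ?vnorm_ge0 //.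
move/(_ isT isT) => H; apply: le_trans H _.
by rewrite exprMn -!exprM mulnC mulrC.
Qed.
End Growth.

Lemma q_scale (R : realType) (V : lmodType R[i]) (h : V -> V -> R[i])
  (hlin : forall (a : R[i]) (x y z : V), h (a *: x + y) z = a * h x z + h y z)
  (hsym : forall x y : V, h y x = conjc (h x y))
  (hpos : forall x : V, 0 <= h x x) (r : R) z :
  q h (((r%:C)%C) *: z) = r ^+ 2 * q h z.
Proof.
rewrite /q (hZl hlin) (hZr hlin hsym) (hxx hpos) /=; ring.
Qed.

Lemma sup_ubE (R : realType) (V : Type) (P : V -> Prop) (f : V -> R) (M : R) x :
  (forall y, P y -> f y <= M) -> P x -> f x <= sup [set f y | y in P].
Proof.
move=> H Px; apply: ub_le_sup; last by exists x.
by exists M => r [y Py <-]; exact: H.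
Qed.

Lemma sup_leE (R : realType) (V : Type) (P : V -> Prop) (f : V -> R) (M : R) :
  (exists x, P x) -> (forall y, P y -> f y <= M) -> sup [set f y | y in P] <= M.
Proof.
move=> [x Px] H; apply: ge_sup; first by exists (f x), x.
by move=> r [y Py <-]; exact: H.
Qed.

Lemma sqrt_sum_le (R : realType) (a b : R) : Num.sqrt (a ^+ 2 + b ^+ 2) <= `|a| + `|b|.
Proof.
have a0 := normr_ge0 a; have b0 := normr_ge0 b.
rewrite -[`|a| + `|b|]ger0_norm ?addr_ge0 // -sqrtr_sqr ler_sqrt ?sqr_ge0 //.
have -> : a ^+ 2 = `|a| ^+ 2 by rewrite -normrX ger0_norm // sqr_ge0.
have -> : b ^+ 2 = `|b| ^+ 2 by rewrite -normrX ger0_norm // sqr_ge0.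
nra.
Qed.

Unset Implicit Arguments.

Theorem theorem3p9 (R : realType) (V : lmodType R[i]) (ip : V -> V -> R[i])
  (A T S : V -> V) :
  is_hilbert ip ->
  positive_op ip A -> nonzero_op A ->
  in_BA ip A T -> in_BA ip A S ->
  A_selfadjoint ip A T -> A_selfadjoint ip A S ->
  numradA ip A (op_add T S)
    <= Num.sqrt (numradA ip A (op_add T (op_scale 'i%C S)) ^+ 2
                 + numradA ip A (S \o T)
                 + opnormA ip A T * opnormA ip A S)
  /\
  Num.sqrt (numradA ip A (op_add T (op_scale 'i%C S)) ^+ 2
            + numradA ip A (S \o T)
            + opnormA ip A T * opnormA ip A S)
    <= numradA ip A T + numradA ip A S.
Proof.
move=> [ipl ipsym ippos ipdef _] [[Alin [cA HcA]] Apos] [x0 Ax0]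
  [[Tlin [cT HcT]] _] [[Slin [cS HcS]] _] TsaA SsaA.
pose h := fun x y => ip (A x) y.
have hlin : forall (a : R[i]) x y z, h (a *: x + y) z = a * h x z + h y z.
  by move=> a x y z; rewrite /h Alin ipl.
have hDr' : forall z x y, h z (x + y) = h z x + h z y.
  by move=> z x y; rewrite /h (hDr ipl ipsym).
have hZr' : forall z a x, h z (a *: x) = conjc a * h z x.
  by move=> z a x; rewrite /h (hZr ipl ipsym).
have hpos : forall x, 0 <= h x x := Apos.
have hsym := polar hlin hDr' hZr' hpos.
have mksym : forall B : V -> V, A_selfadjoint ip A B -> forall x y, h (B x) y = h x (B y).
  move=> B HB x y; have := hsym (B y) x; rewrite /h => ->.
  by rewrite HB; exact: ipsym.
have Tsym := mksym T TsaA; have Ssym := mksym S SsaA.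
have sphereE : forall x, A_sphere ip A x <-> q h x = 1.
  move=> x; rewrite /A_sphere /normA /ipA /=; split => H.
    by rewrite -(sqr_sqrtr (q_ge0 hpos x)); rewrite /q /h H expr1n.
  by rewrite /q /h in H; rewrite H sqrtr1.
have Abnd : forall (B : V -> V) (cB : R),
    (forall x y, h (B x) y = h x (B y)) ->
    (forall x, vnorm ip (B x) <= cB * vnorm ip x) ->
    forall x, q h x = 1 -> Num.sqrt (q h (B x)) <= `|cB| + 1.
  move=> B cB Bsym HB x qx.
  have K0 : 0 < `|cB| + 1 by have := normr_ge0 cB; lra.
  have := A_bound hlin hsym hpos Bsym qx (exprn_gt0 2 K0) (growth ipl ipsym ippos HcA HB x).
  move=> H; have := H; rewrite -(ler_sqrt (q h (B x))) ?sqr_ge0 //.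
  by rewrite sqrtr_sqr ger0_norm // ltW.
have [x1 qx1] : exists x, q h x = 1.
  have qx0 : 0 < q h x0.
    rewrite lt_def q_ge0 // andbT; apply/eqP => q0; apply: Ax0; apply: ipdef.
    have := CS hlin hsym hpos x0 (A x0); rewrite q0 sqrtr0 mul0r => Hn.
    apply: ComplexField.Normc.eq0_normc; apply/eqP; rewrite eq_le Hn nc_ge0.
    done.
  exists ((((Num.sqrt (q h x0))^-1)%:C)%C *: x0).
  rewrite (q_scale hlin hsym hpos) exprVn sqr_sqrtr; last exact: ltW.
  by rewrite mulVf // gt_eqF.
have ex1 : exists x, A_sphere ip A x by exists x1; apply/sphereE.
have ubB : forall (B : V -> V) (cB : R), (forall x y, h (B x) y = h x (B y)) ->
    (forall x, vnorm ip (B x) <= cB * vnorm ip x) ->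
    forall x, q h x = 1 ->
    `|cRe (h (B x) x)| <= numradA ip A B /\ Num.sqrt (q h (B x)) <= opnormA ip A B.
  move=> B cB Bsym HB x qx; split.
    rewrite -nc_real -(realB hsym Bsym).
    apply: (sup_ubE (f := fun y => nc (h (B y) y)) (M := `|cB| + 1)); last exact/sphereE.
    move=> y /sphereE qy; rewrite (realB hsym Bsym) nc_real.
    exact: le_trans (absB_le hlin hsym hpos Bsym qy) (Abnd B cB Bsym HB y qy).
  apply: (sup_ubE (f := fun y => Num.sqrt (q h (B y))) (M := `|cB| + 1)); last exact/sphereE.
  by move=> y /sphereE qy; exact: (Abnd B cB Bsym HB y qy).
have NleW : forall (B : V -> V) (cB : R), (forall x y, h (B x) y = h x (B y)) ->
    (forall x, vnorm ip (B x) <= cB * vnorm ip x) ->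
    (forall (a : R[i]) x y, B (a *: x + y) = a *: B x + B y) ->
    opnormA ip A B <= numradA ip A B.
  move=> B cB Bsym HB Blin.
  apply: (sup_leE (f := fun y => Num.sqrt (q h (B y)))) ex1 _ => y /sphereE qy.
  apply: (opnorm_le hlin hsym hpos Blin Bsym _ qy) => u qu.
  rewrite (realB hsym Bsym) nc_real; exact: (ubB B cB Bsym HB u qu).1.
have NT := NleW T cT Tsym HcT Tlin; have NS := NleW S cS Ssym HcS Slin.
have ubT := ubB T cT Tsym HcT; have ubS := ubB S cS Ssym HcS.
have Wel : forall x, nc (h (T x + 'i%C *: S x) x)
    = Num.sqrt (cRe (h (T x) x) ^+ 2 + cRe (h (S x) x) ^+ 2).
  move=> x; rewrite (hDl hlin) (hZl hlin) (realB hsym Tsym x) (realB hsym Ssym x).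
  move: (cRe (h (T x) x)) (cRe (h (S x) x)) => a b.
  by rewrite nc_def /=; congr (Num.sqrt _); ring.
have ubW : forall x, q h x = 1 ->
    Num.sqrt (cRe (h (T x) x) ^+ 2 + cRe (h (S x) x) ^+ 2)
      <= numradA ip A (op_add T (op_scale 'i%C S)).
  move=> x qx; rewrite -Wel.
  apply: (sup_ubE (f := fun y => nc (h (T y + 'i%C *: S y) y))
            (M := (`|cT| + 1) + (`|cS| + 1))); last exact/sphereE.
  move=> y /sphereE qy; rewrite Wel; apply: le_trans (sqrt_sum_le _ _) _.
  apply: lerD.
    exact: le_trans (absB_le hlin hsym hpos Tsym qy) (Abnd T cT Tsym HcT y qy).
  exact: le_trans (absB_le hlin hsym hpos Ssym qy) (Abnd S cS Ssym HcS y qy).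
have CSTS : forall x, q h x = 1 ->
    nc (h (T x) (S x)) <= Num.sqrt (q h (T x)) * Num.sqrt (q h (S x)).
  by move=> x qx; exact: CS hlin hsym hpos (T x) (S x).
have ubP : forall x, q h x = 1 -> nc (h (T x) (S x)) <= numradA ip A (S \o T).
  move=> x qx; rewrite -Ssym.
  apply: (sup_ubE (f := fun y => nc (h (S (T y)) y))
            (M := (`|cT| + 1) * (`|cS| + 1))); last exact/sphereE.
  move=> y /sphereE qy; rewrite Ssym; apply: le_trans (CSTS y qy) _.
  by apply: ler_pM; rewrite ?sqrtr_ge0 //; [exact: Abnd T cT Tsym HcT y qy|exact: Abnd S cS Ssym HcS y qy].
set WT := numradA ip A T; set WS := numradA ip A S.
set W := numradA ip A (op_add T (op_scale 'i%C S)).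
set P := numradA ip A (S \o T).
set NT' := opnormA ip A T; set NS' := opnormA ip A S.
have W0 : 0 <= W by apply: le_trans (ubW x1 qx1); exact: sqrtr_ge0.
have P0 : 0 <= P by apply: le_trans (ubP x1 qx1); exact: nc_ge0.
have NT0 : 0 <= NT' by apply: le_trans (ubT x1 qx1).2; exact: sqrtr_ge0.
have NS0 : 0 <= NS' by apply: le_trans (ubS x1 qx1).2; exact: sqrtr_ge0.
split.
  apply: (sup_leE (f := fun y => nc (h (T y + S y) y))) ex1 _ => y /sphereE qy.
  rewrite (hDl hlin) (realB hsym Tsym y) (realB hsym Ssym y).
  move: (buzano hlin hsym hpos Tsym Ssym qy) (ubW y qy) (ubP y qy) (ubT y qy) (ubS y qy).
  move: (cRe (h (T y) y)) (cRe (h (S y) y)) => t s Bz Wy Py [_ Ty] [_ Sy].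
  have -> : ((t%:C)%C + (s%:C)%C) = (((t + s)%:C)%C : R[i]) by apply/eqP; rewrite eq_complex /= addr0 !eqxx.
  have Rnn : 0 <= W ^+ 2 + P + NT' * NS'.
    by apply: addr_ge0; [apply: addr_ge0 => //; exact: sqr_ge0|exact: mulr_ge0].
  rewrite nc_real -sqrtr_sqr ler_sqrt //.
  have e1 : t ^+ 2 + s ^+ 2 <= W ^+ 2.
    have ts0 : 0 <= t ^+ 2 + s ^+ 2 by apply: addr_ge0; exact: sqr_ge0.
    rewrite -(sqr_sqrtr ts0).
    by apply: lerXn2r; rewrite ?nnegrE ?sqrtr_ge0.
  have e4 : Num.sqrt (q h (T y)) * Num.sqrt (q h (S y)) <= NT' * NS'.
    by apply: ler_pM; rewrite ?sqrtr_ge0.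
  have -> : (t + s) ^+ 2 = t ^+ 2 + s ^+ 2 + 2 * t * s by ring.
  have Py' : nc (h (T y) (S y)) <= P := Py.
  clear -Bz Py' e1 e4; lra.
have WW : W <= Num.sqrt (WT ^+ 2 + WS ^+ 2).
  apply: (sup_leE (f := fun y => nc (h (T y + 'i%C *: S y) y))) ex1 _ => y /sphereE qy.
  rewrite Wel ler_sqrt; last by rewrite addr_ge0 ?sqr_ge0.
  have [T1 _] := ubT y qy; have [S1 _] := ubS y qy.
  have a1 : cRe (h (T y) y) ^+ 2 <= WT ^+ 2.
    have := lerXn2r 2 (normr_ge0 _) (le_trans (normr_ge0 _) T1) T1.
    by rewrite -normrX ger0_norm ?sqr_ge0.
  have a2 : cRe (h (S y) y) ^+ 2 <= WS ^+ 2.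
    have := lerXn2r 2 (normr_ge0 _) (le_trans (normr_ge0 _) S1) S1.
    by rewrite -normrX ger0_norm ?sqr_ge0.
  exact: lerD.
have PN : P <= NT' * NS'.
  apply: (sup_leE (f := fun y => nc (h (S (T y)) y))) ex1 _ => y /sphereE qy.
  rewrite Ssym; apply: le_trans (CSTS y qy) _.
  by apply: ler_pM; rewrite ?sqrtr_ge0 //; [exact: (ubT y qy).2|exact: (ubS y qy).2].
have NTW : NT' <= WT := NT.
have NSW : NS' <= WS := NS.
have W2 : W ^+ 2 <= WT ^+ 2 + WS ^+ 2.
  have := lerXn2r 2 W0 (sqrtr_ge0 _) WW.
  by rewrite sqr_sqrtr // addr_ge0 // sqr_ge0.
have WT0 : 0 <= WT := le_trans NT0 NTW.
have WS0 : 0 <= WS := le_trans NS0 NSW.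
rewrite -[WT + WS]ger0_norm ?addr_ge0 // -sqrtr_sqr ler_sqrt ?sqr_ge0 //.
have NN : NT' * NS' <= WT * WS by apply: ler_pM.
have -> : (WT + WS) ^+ 2 = WT ^+ 2 + WS ^+ 2 + 2 * (WT * WS) by ring.
clear -W2 PN NN; lra.
Qed.
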